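(* Let $n\geq 3$ and let $K_n$ be the complete graph on $n$ vertices. Then $\chi_{td}(\mathrm{cl}(K_n)) \leq 2\chi_{td}(K_n)$.
   Context: For a simple graph $G$ and a positive integer $k$, a proper $k$-total difference labeling of $G$ is a function $f: V(G)\to\{1,\dots,k\}$, extended to edges by $f(\{u,v\}) = |f(u)-f(v)|$, such that: (i) adjacent vertices receive different labels; (ii) two distinct edges sharing a vertex receive different labels; (iii) no edge receives the same label as either of its endpoints. $\chi_{td}(G)$ denotes the smallest $k$ for which such a labeling exists. The clone $\mathrm{cl}(G)$ of $G$ is the Cartesian product $G\,\square\, K_2$, i.e. two copies of $G$ with each vertex joined by an edge to its corresponding copy. *)

(* Defs.v *)
From mathcomp Require Import all_boot.
Set Implicit Arguments. Unset Strict Implicit. Unset Printing Implicit Defensive.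

Record sgraph := SGraph {
  vtx : finType;
  adj : rel vtx;
  adj_sym : symmetric adj;
  adj_irr : irreflexive adj }.

Definition absdiff (a b : nat) : nat := (a - b) + (b - a).

Definition ptd_labeling (G : sgraph) (k : nat) (f : vtx G -> nat) : Prop :=
  (forall v, 1 <= f v <= k) /\
  (forall u v, adj u v -> f u <> f v) /\
  (* (ii) distinct edges {u,v},{u,w} sharing vertex u get different labels *)
  (forall u v w, adj u v -> adj u w -> v <> w -> absdiff (f u) (f v) <> absdiff (f u) (f w)) /\
  (forall u v, adj u v -> absdiff (f u) (f v) <> f u /\ absdiff (f u) (f v) <> f v).

Definition has_ptd (G : sgraph) (k : nat) : Prop := exists f, @ptd_labeling G k f.

Definition is_chi_td (G : sgraph) (c : nat) : Prop :=
  has_ptd G c /\ forall k, has_ptd G k -> c <= k.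

Definition Kadj (n : nat) : rel 'I_n := fun i j => i != j.
Lemma Kadj_sym n : symmetric (@Kadj n).
Proof. by move=> i j; rewrite /Kadj eq_sym. Qed.
Lemma Kadj_irr n : irreflexive (@Kadj n).
Proof. by move=> i; rewrite /Kadj eqxx. Qed.
Definition Kn (n : nat) : sgraph := SGraph (@Kadj_sym n) (@Kadj_irr n).

(* clone cl(G) = G □ K_2 *)
Definition cladj (G : sgraph) : rel (vtx G * bool) := fun x y =>
  ((x.2 == y.2) && adj x.1 y.1) || ((x.1 == y.1) && (x.2 != y.2)).
Lemma cladj_sym G : symmetric (@cladj G).
Proof.
move=> [u a] [v b]; rewrite /cladj /= (eq_sym a) (eq_sym u) adj_sym //.
Qed.
Lemma cladj_irr G : irreflexive (@cladj G).
Proof. by move=> [u a]; rewrite /cladj /= !eqxx adj_irr. Qed.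
Definition clone (G : sgraph) : sgraph := SGraph (@cladj_sym G) (@cladj_irr G).

(* Main.v *)
Require Import Defs.
From mathcomp Require Import all_boot zify perm.
From Stdlib Require Import Classical.

Lemma A1 x y z : 0 < x -> 0 < y -> 0 < z -> absdiff x y <> absdiff x z ->
  absdiff (2*x).-1 (2*y).-1 <> absdiff (2*x).-1 (2*z).-1.
Proof. rewrite /absdiff; lia. Qed.
Lemma A2 x y z : absdiff x y <> absdiff x z ->
  absdiff (2*x) (2*y) <> absdiff (2*x) (2*z).
Proof. rewrite /absdiff; lia. Qed.
Lemma A3 x y z : 0 < x -> 0 < y -> 0 < z ->
  absdiff (2*x).-1 (2*y).-1 <> absdiff (2*x).-1 (2*z).
Proof. rewrite /absdiff; lia. Qed.
Lemma A4 x y z : 0 < x -> 0 < y -> 0 < z ->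
  absdiff (2*x) (2*y) <> absdiff (2*x) (2*z).-1.
Proof. rewrite /absdiff; lia. Qed.

Lemma clone_lab n c (f g : 'I_n -> nat) :
  @ptd_labeling (Kn n) c f -> @ptd_labeling (Kn n) c g ->
  (forall u, g u + 1 <> 2 * f u) ->
  has_ptd (clone (Kn n)) (2 * c).
Proof.
move=> [fr [fi [fii fiii]]] [gr [gi [gii giii]]] H.
exists (fun x : 'I_n * bool => if x.2 then 2 * g x.1 else (2 * f x.1).-1).
rewrite /ptd_labeling /= /cladj /= /Kadj in fi fii fiii gi gii giii *.
split; [|split; [|split]].
- rewrite /absdiff in fi fii fiii gi gii giii *.
  move=> [u []] /=; have := fr u; have := gr u; lia.
- move=> [u bu] [v bv] /=; have := fr u; have := gr u; have := fr v; have := gr v.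
  case: bu; case: bv => /=; case: (eqVneq u v) => [->|/[dup] Huv /fi Hf] //= ;
  rewrite ?(gi _ _ Huv); try lia; try (have := gi _ _ Huv; lia).
- move=> [u bu] [v bv] [w bw] /=.
  have /andP[? _] := fr u; have /andP[? _] := gr u; have /andP[? _] := fr v; have /andP[? _] := gr v.
  have /andP[? _] := fr w; have /andP[? _] := gr w.
  case: bu; case: bv; case: bw => /=; rewrite ?andbF ?andbT ?orbF /= => Hy Hz Hne;
  repeat match goal with Hh : is_true (?a == ?b) |- _ => move/eqP: Hh => Hh; subst end;
  try congruence;
  try (have Hvw : v <> w by move=> E; apply: Hne; rewrite E);
  try (apply: A2; exact: gii _ _ _ Hy Hz Hvw); try (apply: A1 => //; exact: fii _ _ _ Hy Hz Hvw);
  try (by apply: A3); try (by apply: A4); try (by apply: nesym; apply: A3); try (by apply: nesym; apply: A4).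
- rewrite /absdiff in fi fii fiii gi gii giii *.
  move=> [u bu] [v bv] /=; have := fr u; have := gr u; have := fr v; have := gr v.
  have := H u; have := H v.
  case: bu; case: bv => /=; case: (eqVneq u v) => [->|/[dup] Huv /fiii Hf] //= ;
  try lia; try (have := giii _ _ Huv; lia).
Qed.

Lemma perm_lab n c (f : 'I_n -> nat) (s : {perm 'I_n}) :
  @ptd_labeling (Kn n) c f -> @ptd_labeling (Kn n) c (fun u => f (s u)).
Proof.
rewrite /ptd_labeling /= /Kadj.
move=> [fr [fi [fii fiii]]]; split; [|split; [|split]].
- by move=> v; apply: fr.
- by move=> u v Huv; apply: fi; rewrite (inj_eq perm_inj).
- move=> u v w Huv Huw Hvw; apply: fii; rewrite ?(inj_eq perm_inj) //.
  by move/perm_inj.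
- by move=> u v Huv; apply: fiii; rewrite (inj_eq perm_inj).
Qed.

Lemma min_ex G k : has_ptd G k -> exists d, is_chi_td G d /\ d <= k.
Proof.
elim/ltn_ind: k => k IH Hk.
case: (classic (exists k', k' < k /\ has_ptd G k')) => [[k' [lt Hk']]| N].
- have [d [Hd le]] := IH k' lt Hk'. exists d; split => //. lia.
- exists k; split; [split=>//| ] => //.
  move=> k' Hk'; rewrite leqNgt; apply/negP => lt; apply N; eauto.
Qed.

Theorem mainTheorem10 (n : nat) (hn : 3 <= n) (c : nat) :
  is_chi_td (Kn n) c ->
  exists d, is_chi_td (clone (Kn n)) d /\ d <= 2 * c.
Proof.
move=> [[f Hf] _]; apply: min_ex.
have Hf' := Hf; move: Hf' => [fr [fi _]].
rewrite /= /Kadj in fi.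
case: (boolP [exists a, f a == 1]) => [/existsP [a /eqP Ha]| /existsPn N].
- have [b Hb] : exists b : 'I_n, b != a.
    have h0 : 0 < n by lia.
    have h1 : 1 < n by lia.
    case: (eqVneq (val a) 0) => E.
    + exists (Ordinal h1); apply/eqP => E'; rewrite -E' /= in E; done.
    + exists (Ordinal h0); apply/eqP => E'; by rewrite -E' in E.
  apply: (clone_lab _ _ _ _ Hf (perm_lab _ _ _ (tperm a b) Hf)) => u.
  case: (tpermP a b u) => [->|->|Hua Hub].
  + by move=> /= ; have := fi b a Hb; lia.
  + by have := fi b a Hb; lia.
  + have : u != a by apply/eqP.
    move/fi; rewrite Ha; have := fr u; lia.
- apply: (clone_lab _ _ _ _ Hf Hf) => u.
  have := N u; have := fr u; move/eqP: (N u) ; lia.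
Qed.
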